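(* Let $\beta_1,\dots,\beta_p\in\mathbb{R}$, $\delta_1^2,\dots,\delta_p^2>0$, $\sigma^2>0$, $\nu>0$, and $\Sigma=\sigma^2\boldsymbol\beta\boldsymbol\beta^\top+\mathrm{diag}(\delta_1^2,\dots,\delta_p^2)$. Let $k_p$ be the number of strictly positive entries of the long-only minimum variance portfolio (the minimizer of $w^\top\Sigma w$ subject to $\sum_iw_i=1$, $w_i\ge0$). Define $$G_p(y)=\frac{\nu^2}{p\sigma^2}+\frac{\nu^2}{p}\sum_{j=1}^p\frac{\beta_j}{\delta_j^2}(\beta_j-y)\mathbf{1}_{\{\beta_j\le y\}}.$$ Suppose $\frac1p\sum_{i=1}^p\beta_i/\delta_i^2>0$ and $G_p$ has a unique zero $\beta^*(p)\in(0,\infty)$. Then $$k_p=\sum_{i=1}^p\mathbf{1}_{\{\beta_i<\beta^*(p)\}},$$ i.e. $k_p/p=F_p(\beta^*(p)^-)$, where $F_p$ is the empirical cdf of $\beta_1,\dots,\beta_p$ and $F_p(t^-)$ denotes its left limit at $t$.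
   Context: In the paper $\nu$ is defined by $1/\nu^2=\mathbb{E}[1/\delta^2]$ for the distribution from which the $\delta_j^2$ are drawn; only $\nu>0$ matters here. *)

(* Defs.v *)
From mathcomp Require Import all_boot all_order all_algebra.
Set Implicit Arguments. Unset Strict Implicit. Unset Printing Implicit Defensive.
Import Order.TTheory GRing.Theory Num.Theory.
Local Open Scope ring_scope.

Definition factor_cov (R : realFieldType) (p : nat) (sigma2 : R)
  (beta delta2 : 'I_p -> R) : 'M[R]_p :=
  \matrix_(i, j) (sigma2 * beta i * beta j + (i == j)%:R * delta2 i).

Definition port_var (R : realFieldType) (p : nat) (S : 'M[R]_p) (w : 'cV[R]_p) : R :=
  ((w^T *m S *m w) 0 0).

Definition long_only (R : realFieldType) (p : nat) (w : 'cV[R]_p) : Prop :=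
  (forall i, 0 <= w i 0) /\ \sum_i w i 0 = 1.

Definition is_lo_mvp (R : realFieldType) (p : nat) (S : 'M[R]_p) (w : 'cV[R]_p) : Prop :=
  long_only w /\ forall v : 'cV[R]_p, long_only v -> port_var S w <= port_var S v.

Definition Gp (R : realFieldType) (p : nat) (sigma2 nu : R)
  (beta delta2 : 'I_p -> R) (y : R) : R :=
  nu ^+ 2 / (p%:R * sigma2) +
  nu ^+ 2 / p%:R * \sum_j (if beta j <= y then beta j / delta2 j * (beta j - y) else 0).

(* Main.v *)
Require Import Defs.
From mathcomp Require Import all_boot all_order all_algebra.
From mathcomp.algebra_tactics Require Import ring lra.
Import Order.TTheory GRing.Theory Num.Theory.
Local Open Scope ring_scope.

Lemma qform (R : realFieldType) (p : nat) (s : R) (b d : 'I_p -> R) (u : 'cV[R]_p) :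
  port_var (factor_cov s b d) u =
  s * (\sum_i b i * u i 0) ^+ 2 + \sum_i d i * u i 0 ^+ 2.
Proof.
rewrite /port_var !mxE.
under eq_bigr => j _ do rewrite !mxE mulr_suml.
under eq_bigr => j _ do under eq_bigr => i _ do rewrite !mxE.
under eq_bigr => j _ do under eq_bigr => i _ do rewrite mulrDr mulrDl.
under eq_bigr => j _ do rewrite big_split /=.
rewrite big_split /=; congr (_ + _).
  rewrite expr2 mulr_suml mulr_sumr; apply: eq_bigr => j _.
  rewrite !mulr_sumr; apply: eq_bigr => i _; ring.
apply: eq_bigr => j _.
rewrite (bigD1 j) //= eqxx big1 ?addr0; first by rewrite mulr1n mul1r; ring.
by move=> i /negbTE ->; rewrite mulr0n mul0r mulr0 mul0r.
Qed.
Theorem lemma4 (R : realFieldType) (p : nat) (beta delta2 : 'I_p -> R)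
  (sigma2 nu bstar : R)
  (hdelta : forall i, 0 < delta2 i) (hsigma : 0 < sigma2) (hnu : 0 < nu)
  (hmean : 0 < p%:R^-1 * \sum_i beta i / delta2 i)
  (hbpos : 0 < bstar)
  (hzero : Gp sigma2 nu beta delta2 bstar = 0)
  (huniq : forall y : R, Gp sigma2 nu beta delta2 y = 0 -> y = bstar)
  (w : 'cV[R]_p)
  (hw : is_lo_mvp (factor_cov sigma2 beta delta2) w) :
  #|[set i : 'I_p | 0 < w i 0]| = #|[set i : 'I_p | beta i < bstar]|.
Proof.
have pR : p%:R != 0 :> R.
  by apply/negP => /eqP h; move: hmean; rewrite h invr0 mul0r ltxx.
pose a i := if beta i < bstar then (bstar - beta i) / delta2 i else 0.
pose A := \sum_i a i.
rewrite /Gp in hzero.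
set S' := \sum_j _ in hzero.
have e1 : \sum_i beta i * a i = - S'.
  rewrite /S' -sumrN; apply: eq_bigr => i _; rewrite /a.
  have [h|h|h] := ltgtP (beta i) bstar.
  - ring.
  - by rewrite mulr0 oppr0.
  - by rewrite h subrr !mulr0 oppr0.
have hS : \sum_i beta i * a i = sigma2^-1.
  have nz : nu^+2 / p%:R != 0 by rewrite mulf_neq0 // ?expf_neq0 ?invr_eq0 // gt_eqF.
  have : nu^+2 / p%:R * (sigma2^-1 + S') = 0 by rewrite mulrDr -hzero invfM mulrA.
  move/eqP; rewrite mulf_eq0 (negbTE nz) /= => /eqP h.
  rewrite e1; lra.
have [j hj] : exists j, beta j < bstar.
  case: (pickP [pred j | beta j < bstar]) => [j hj | hn]; first by exists j.
  move: hS; rewrite big1 => [h|i _]; last by move: (hn i) => /= hi; rewrite /a hi mulr0.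
  by move: (invr_gt0 sigma2); rewrite hsigma -h ltxx.
have a_ge0 : forall i, 0 <= a i.
  move=> i; rewrite /a; case: ifP => h //.
  by rewrite divr_ge0 // ?subr_ge0 ?ltW.
have hA : 0 < A.
  rewrite /A (bigD1 j) //=.
  have : 0 <= \sum_(i < p | i != j) a i by apply: sumr_ge0.
  have : 0 < a j by rewrite /a hj divr_gt0 // subr_gt0.
  lra.
pose v : 'cV[R]_p := \col_i (a i / A).
have hv : long_only v.
  split; first by move=> i; rewrite mxE divr_ge0 // ltW.
  under eq_bigr do rewrite mxE.
  by rewrite -mulr_suml divff // gt_eqF.
have key : forall u, long_only u ->
  \sum_i delta2 i * (u i 0 - v i 0) ^+ 2 <=
  port_var (factor_cov sigma2 beta delta2) u - port_var (factor_cov sigma2 beta delta2) v.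
  move=> u [u0 u1].
  rewrite !qform.
  set Bu := \sum_i beta i * u i 0.
  set Bv := \sum_i beta i * v i 0.
  have hBv : sigma2 * Bv = A^-1.
    rewrite /Bv; under eq_bigr do rewrite mxE mulrA.
    by rewrite -mulr_suml hS mulrA divff ?mul1r // gt_eqF.
  have E1 : \sum_i delta2 i * u i 0 ^+ 2 = \sum_i delta2 i * (u i 0 - v i 0) ^+ 2
     + 2 * \sum_i delta2 i * v i 0 * (u i 0 - v i 0) + \sum_i delta2 i * v i 0 ^+ 2.
    rewrite mulr_sumr -!big_split /=; apply: eq_bigr => i _; ring.
  have E2 : Bu - Bv = \sum_i beta i * (u i 0 - v i 0).
    rewrite /Bu /Bv -sumrB; apply: eq_bigr => i _; ring.
  rewrite E1.
  set X := \sum_i delta2 i * (u i 0 - v i 0) ^+ 2.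
  set Y := \sum_i delta2 i * v i 0 * (u i 0 - v i 0).
  have G0 : 0 <= sigma2 * Bv * (Bu - Bv) + Y.
    rewrite E2 mulr_sumr /Y -big_split /=.
    have H0 : \sum_i bstar / A * (u i 0 - v i 0) = 0.
      by rewrite -mulr_sumr sumrB u1 (proj2 hv) subrr mulr0.
    apply: (le_trans (_ : 0 <= \sum_i bstar / A * (u i 0 - v i 0))); first by rewrite H0.
    apply: ler_sum => i _.
    rewrite hBv !mxE /a.
    case: ifP => h.
      have dn : delta2 i != 0 by rewrite gt_eqF.
      rewrite le_eqVlt; apply/orP; left; apply/eqP.
      by field; rewrite gt_eqF.
    rewrite !(mul0r, mulr0, subr0, addr0) mulrA.
    apply: ler_wpM2r; first exact: u0.
    rewrite [A^-1 * _]mulrC.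
    apply: ler_wpM2r; first by rewrite invr_ge0 ltW.
    by rewrite leNgt h.
  have sq : 0 <= sigma2 * (Bu - Bv) ^+ 2 by rewrite mulr_ge0 ?sqr_ge0 // ltW.
  have : sigma2 * Bu ^+ 2 - sigma2 * Bv ^+ 2 = sigma2 * (Bu - Bv) ^+ 2 + 2 * (sigma2 * Bv * (Bu - Bv)) by ring.
  lra.
case: hw => hw1 hw2.
have := key w hw1.
have := hw2 v hv.
move=> h1 h2.
have hz : \sum_i delta2 i * (w i 0 - v i 0) ^+ 2 = 0.
  apply/eqP; rewrite eq_le; apply/andP; split; first lra.
  by apply: sumr_ge0 => i _; rewrite mulr_ge0 ?sqr_ge0 // ltW.
have hwv : forall i, w i 0 = a i / A.
  move=> i.
  have := @psumr_eq0P _ _ xpredT (fun i => delta2 i * (w i 0 - v i 0) ^+ 2)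
    (fun k _ => mulr_ge0 (ltW (hdelta k)) (sqr_ge0 (w k 0 - v k 0))) hz i isT.
  move/eqP; rewrite mulf_eq0 gt_eqF //= sqrf_eq0 subr_eq0 mxE => /eqP //.
apply: eq_card => i; rewrite !inE hwv /a.
case: ifP => h.
  by rewrite divr_gt0 // divr_gt0 // subr_gt0.
by rewrite mul0r ltxx.
Qed.
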